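(* Consider an execution of the convergence algorithm described in the context, with $n>5f$ robots of which at most $f$ are Byzantine and $m$ are correct. Let $U_{(1)}(t)\le\dots\le U_{(m)}(t)$ be the sorted positions of the correct robots at time $t$. If a correct robot $i$ with position $x_i$ is elected at time $t$ (i.e., its observation at time $t$ makes it elected), then $x_i\le U_{(f+1)}(t)$ or $x_i\ge U_{(m-f)}(t)$.
   Context: Setting: $n$ robots on the real line, of which at most $f$ are Byzantine (arbitrary positions). Robots observe the multiset $P(t)$ of all $n$ positions, sorted $P_1(t)\le\dots\le P_n(t)$. Algorithm: robot $i$ with position $x_i$ is elected iff $x_i\le P_{f+1}(t)$ or $x_i\ge P_{n-f}(t)$. Only elected robots move, toward the midpoint of $\min(x_i,P_{2f+1}(t))$ and $\max(x_i,P_{n-2f}(t))$. *)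

(* Defs.v *)
From mathcomp Require Import all_boot all_order all_algebra.
Set Implicit Arguments. Unset Strict Implicit. Unset Printing Implicit Defensive.
Import Order.TTheory GRing.Theory Num.Theory.
Local Open Scope ring_scope.

(* k-th smallest element (1-indexed) of the multiset s: s_(k) *)
Definition kth (R : realDomainType) (s : seq R) (k : nat) : R :=
  nth 0 (sort <=%R s) k.-1.

Definition all_pos (R : realDomainType) (n : nat) (x : 'I_n -> R) : seq R :=
  [seq x j | j <- enum 'I_n].

Definition correct_pos (R : realDomainType) (n : nat) (x : 'I_n -> R)
  (C : {set 'I_n}) : seq R :=
  [seq x j | j <- enum C].

Definition elected (R : realDomainType) (n f : nat) (x : 'I_n -> R) (i : 'I_n) : bool :=
  (x i <= kth (all_pos x) f.+1) || (kth (all_pos x) (n - f) <= x i).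

(* Main.v *)
Require Import Defs.
From mathcomp Require Import all_boot all_order all_algebra zify.
Import Order.TTheory GRing.Theory Num.Theory.
Local Open Scope ring_scope.

Section S.
Variable R : realDomainType.
Implicit Types (s : seq R) (v : R).

Let srt s : sorted <=%R (sort <=%R s) := sort_sorted (@le_total _ R) s.
Let mono s : {in [pred n | (n < size (sort <=%R s))%N] &,
   {homo nth 0 (sort <=%R s) : i j / (i <= j)%N >-> i <= j}} :=
  sorted_leq_nth le_trans lexx 0 (srt s).
Let cperm s (a : pred R) : count a (sort <=%R s) = count a s.
Proof. by apply/permP; rewrite perm_sort. Qed.

Lemma C1 s j : (j < size s)%N -> (j.+1 <= count (fun y : R => (y <= nth 0 (sort <=%R s) j)%R) s)%N.
Proof.
move=> hj; set a := (fun y => _).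
have sz : size (sort <=%R s) = size s by rewrite size_sort.
rewrite -cperm -(cat_take_drop j.+1 (sort _ _)) count_cat.
have /eqP-> : count a (take j.+1 (sort <=%R s)) == size (take j.+1 (sort <=%R s)).
  rewrite -all_count; apply/(all_nthP 0) => k; rewrite size_takel ?sz // => hk.
  rewrite nth_take //; apply: mono; rewrite ?inE ?sz //; lia.
by rewrite size_takel ?sz // leq_addr.
Qed.

Lemma D1 s j : (j < size s)%N -> (size s - j <= count (fun y : R => (nth 0 (sort <=%R s) j <= y)%R) s)%N.
Proof.
move=> hj; set a := (fun y => _).
have sz : size (sort <=%R s) = size s by rewrite size_sort.
rewrite -cperm -(cat_take_drop j (sort _ _)) count_cat.
have /eqP-> : count a (drop j (sort <=%R s)) == size (drop j (sort <=%R s)).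
  rewrite -all_count; apply/(all_nthP 0) => k; rewrite size_drop sz => hk.
  rewrite nth_drop //; apply: mono; rewrite ?inE ?sz //; lia.
by rewrite size_drop sz leq_addl.
Qed.

Lemma A1 s j v : (j < size s)%N -> (j.+1 <= count (fun y : R => (y <= v)%R) s)%N ->
  nth 0 (sort <=%R s) j <= v.
Proof.
move=> hj; set a := (fun y => _) => hc; rewrite leNgt; apply/negP => hv; move: hc.
have sz : size (sort <=%R s) = size s by rewrite size_sort.
rewrite -cperm -(cat_take_drop j (sort _ _)) count_cat.
have -> : count a (drop j (sort <=%R s)) = 0%N.
  apply/eqP; rewrite -leqn0 leqNgt -has_count; apply/(has_nthP 0) => -[k].
  rewrite size_drop sz => hk; rewrite nth_drop /a.
  have := mono s j (j + k)%N; rewrite !inE sz => /(_ hj) H.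
  rewrite leNgt (lt_le_trans hv) // H //; lia.
have := count_size a (take j (sort <=%R s)); rewrite size_take sz hj; lia.
Qed.

Lemma B1 s j v : (j < size s)%N -> (size s - j <= count (fun y : R => (v <= y)%R) s)%N ->
  v <= nth 0 (sort <=%R s) j.
Proof.
move=> hj; set a := (fun y => _) => hc; rewrite leNgt; apply/negP => hv; move: hc.
have sz : size (sort <=%R s) = size s by rewrite size_sort.
rewrite -cperm -(cat_take_drop j.+1 (sort _ _)) count_cat.
have -> : count a (take j.+1 (sort <=%R s)) = 0%N.
  apply/eqP; rewrite -leqn0 leqNgt -has_count; apply/(has_nthP 0) => -[k].
  rewrite size_takel ?sz // => hk; rewrite nth_take // /a.
  have := mono s k j; rewrite !inE sz => /(_ _ hj) H.
  rewrite leNgt (le_lt_trans _ hv) // H //; lia.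
have := count_size a (drop j.+1 (sort <=%R s)); rewrite size_drop sz; lia.
Qed.
End S.

Lemma cnt (T : finType) (C : {set T}) (a : pred T) : (count a (enum C) <= count a (enum T))%N.
Proof. rewrite enumT /enum_mem count_filter. apply: sub_count => y /andP[]//. Qed.

Theorem lemma8 (R : realDomainType) (n f : nat) (x : 'I_n -> R)
  (C : {set 'I_n}) (i : 'I_n) :
  (5 * f < n)%N ->
  (#|~: C| <= f)%N ->
  i \in C ->
  elected f x i ->
  x i <= kth (correct_pos x C) f.+1 \/ kth (correct_pos x C) (#|C| - f) <= x i.
Proof.
move=> hn hb _; rewrite /elected /kth.
have hc := cardsC C; rewrite card_ord in hc.
have sa : size (all_pos x) = n by rewrite size_map size_enum_ord.
have sc : size (correct_pos x C) = #|C| by rewrite size_map -cardE.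
have cle : forall a : pred R, (count a (correct_pos x C) <= count a (all_pos x))%N.
  move=> a; rewrite !count_map /enum_mem !count_filter; by apply: sub_count => y /andP[].
case/orP => h; [left|right].
- apply: (le_trans h); apply: A1; first by rewrite sa; lia.
  apply: (leq_trans _ (cle _)); apply: C1; rewrite sc; lia.
- apply: (le_trans _ h); apply: B1; first by rewrite sa; lia.
  apply: (leq_trans _ (cle _)).
  have := @D1 R (correct_pos x C) (#|C| - f).-1; rewrite sa sc => H.
  apply: (leq_trans _ (H _)); lia.
Qed.
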